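(* Let $A=\mathbb{C}[x,y,z]$ and let $B$ be $A$, or its quotient field $Q(A)$, or the $M$-adic completion $\widehat A$ of $A$ at a maximal ideal $M$. Let $a,b,c\in B$. Then $c\,\mathrm{grad}(a)$ and $\mathrm{grad}(b)$ are compatible if and only if $\det\mathrm{Jac}(a,b,c)=0$.
   Context: $\mathrm{grad}(a)=(a_x,a_y,a_z)$ (partial derivatives, extended to $Q(A)$ by the quotient rule and to $\widehat A$ by continuity), $\mathrm{Jac}(f,g,h)$ is the matrix with rows $\mathrm{grad}(f),\mathrm{grad}(g),\mathrm{grad}(h)$. $F=(f,g,h)\in B^3$ is a Poisson triple on $B$ if there is a Poisson bracket on $B$ with $\{y,z\}=f$, $\{z,x\}=g$, $\{x,y\}=h$; two Poisson triples $F,G$ are compatible if $\lambda F+\mu G$ is a Poisson triple on $B$ for all $\lambda,\mu\in\mathbb{C}$. *)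

(* Defs.v *)
From HB Require Import structures.
From mathcomp Require Import all_boot all_algebra.
From mathcomp Require Import reals.
From mathcomp Require Import complex.
From mathcomp Require Import mpoly.

Set Implicit Arguments.
Unset Strict Implicit.
Unset Printing Implicit Defensive.

Import GRing.Theory.
Local Open Scope ring_scope.

(* A "setting" B: a C-algebra given by its operations, together with the    *)
Record Setting (C : Type) := MkSetting {
  car :> Type;
  addB : car -> car -> car;
  oppB : car -> car;
  mulB : car -> car -> car;
  sclB : C -> car -> car;
  zeroB : car;
  xB : car; yB : car; zB : car;
  dxB : car -> car; dyB : car -> car; dzB : car -> car
}.

Section Poisson.
Variables (C : Type) (B : Setting C).

Local Notation "a +' b" := (addB a b) (at level 50, left associativity).
Local Notation "a *' b" := (mulB a b) (at level 40, left associativity).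
Local Notation "l *:' a" := (sclB l a) (at level 40).

(* Poisson bracket on B: C-bilinear (linearity in the second argument
   follows from skew-symmetry), skew-symmetric, Leibniz rule, Jacobi.       *)
Definition poisson_bracket (br : B -> B -> B) : Prop :=
  [/\ (forall (l m : C) (a b c : B),
          br ((l *:' a) +' (m *:' b)) c = (l *:' br a c) +' (m *:' br b c)),
      (forall a b : B, br a b = oppB (br b a)),
      (forall a b c : B, br a (b *' c) = (br a b *' c) +' (b *' br a c)) &
      (forall a b c : B,
          br a (br b c) +' br b (br c a) +' br c (br a b) = zeroB B)].

Definition triple := (B * B * B)%type.

Definition poisson_triple (F : triple) : Prop :=
  exists br : B -> B -> B, poisson_bracket br /\
    [/\ br (yB B) (zB B) = F.1.1, br (zB B) (xB B) = F.1.2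
      & br (xB B) (yB B) = F.2].

Definition lincomb (l m : C) (F G : triple) : triple :=
  ((l *:' F.1.1) +' (m *:' G.1.1),
   (l *:' F.1.2) +' (m *:' G.1.2),
   (l *:' F.2)   +' (m *:' G.2)).

Definition compatible (F G : triple) : Prop :=
  forall l m : C, poisson_triple (lincomb l m F G).

Definition grad (a : B) : triple := (dxB a, dyB a, dzB a).

Definition scaled_grad (c a : B) : triple :=
  (c *' dxB a, c *' dyB a, c *' dzB a).

Local Notation "a -' b" := (addB a (oppB b)) (at level 50, left associativity).

Definition jacdet (a b c : B) : B :=
  let ax := dxB a in let ay := dyB a in let az := dzB a in
  let bx := dxB b in let by_ := dyB b in let bz := dzB b in
  let cx := dxB c in let cy := dyB c in let cz := dzB c in
  (ax *' ((by_ *' cz) -' (bz *' cy)))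
  -' (ay *' ((bx *' cz) -' (bz *' cx)))
  +' (az *' ((bx *' cy) -' (by_ *' cx))).

End Poisson.

Section Rings.
Variable R : realType.
Local Notation C := (complex R).

Definition polyA := {mpoly C[3]}.

Definition polyS : Setting C :=
  @MkSetting C polyA (@GRing.add _) (@GRing.opp _) (@GRing.mul _)
    (fun l p => l *: p) 0
    'X_0 'X_1 'X_(2 : 'I_3)
    (mderiv 0) (mderiv 1) (mderiv (2 : 'I_3)).

(* Q(A), the quotient field of A; partial derivatives are extended by the
   quotient rule, computed on a representative n/d of the fraction.          *)
Definition fracQ := {fraction polyA}.

Definition frac_deriv (i : 'I_3) (q : fracQ) : fracQ :=
  let n := \n_(repr q) in let d := \d_(repr q) in
  tofrac (mderiv i n * d - n * mderiv i d) / tofrac (d * d).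

Definition fracS : Setting C :=
  @MkSetting C fracQ (@GRing.add _) (@GRing.opp _) (@GRing.mul _)
    (fun l q => tofrac (l%:MP : polyA) * q) 0
    (tofrac 'X_0) (tofrac 'X_1) (tofrac 'X_(2 : 'I_3))
    (frac_deriv 0) (frac_deriv 1) (frac_deriv (2 : 'I_3)).

(* The M-adic completion of A at the maximal ideal
   M = (x - p0, y - p1, z - p2), p in C^3: the ring of formal power series
   C[[X,Y,Z]] in X = x - p0, Y = y - p1, Z = z - p2.  A series is the family
   of its coefficients  f i j k  (coefficient of X^i Y^j Z^k).              *)
Definition pseries := nat -> nat -> nat -> C.

Definition ps_add (f g : pseries) : pseries := fun i j k => f i j k + g i j k.
Definition ps_opp (f : pseries) : pseries := fun i j k => - f i j k.
Definition ps_mul (f g : pseries) : pseries := fun i j k =>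
  \sum_(i1 < i.+1) \sum_(j1 < j.+1) \sum_(k1 < k.+1)
     f i1 j1 k1 * g (i - i1)%N (j - j1)%N (k - k1)%N.
Definition ps_scl (l : C) (f : pseries) : pseries := fun i j k => l * f i j k.
Definition ps_zero : pseries := fun _ _ _ => 0.
(* the image of the coordinate x: p0 + X, etc. *)
Definition ps_x (p0 : C) : pseries := fun i j k =>
  if [&& i == 0%N, j == 0%N & k == 0%N] then p0
  else if [&& i == 1%N, j == 0%N & k == 0%N] then 1 else 0.
Definition ps_y (p1 : C) : pseries := fun i j k =>
  if [&& i == 0%N, j == 0%N & k == 0%N] then p1
  else if [&& i == 0%N, j == 1%N & k == 0%N] then 1 else 0.
Definition ps_z (p2 : C) : pseries := fun i j k =>
  if [&& i == 0%N, j == 0%N & k == 0%N] then p2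
  else if [&& i == 0%N, j == 0%N & k == 1%N] then 1 else 0.
Definition ps_dx (f : pseries) : pseries := fun i j k => (i.+1)%:R * f i.+1 j k.
Definition ps_dy (f : pseries) : pseries := fun i j k => (j.+1)%:R * f i j.+1 k.
Definition ps_dz (f : pseries) : pseries := fun i j k => (k.+1)%:R * f i j k.+1.

Definition complS (p : 'I_3 -> C) : Setting C :=
  @MkSetting C pseries ps_add ps_opp ps_mul ps_scl ps_zero
    (ps_x (p 0)) (ps_y (p 1)) (ps_z (p (2 : 'I_3)))
    ps_dx ps_dy ps_dz.

End Rings.

(* Main.v *)
Require Import Defs.
From HB Require Import structures.
From mathcomp Require Import all_boot all_algebra.
From mathcomp Require Import reals complex mpoly.
From mathcomp Require Import ring.
From mathcomp Require boolp.
From Stdlib Require Import FunctionalExtensionality.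
Set Implicit Arguments.
Unset Strict Implicit.
Unset Printing Implicit Defensive.
Import GRing.Theory Num.Theory.
Local Open Scope ring_scope.


Section Abstract.
Variables (C : nzRingType) (T : comNzRingType) (iota : C -> T).
Variables (scl : C -> T -> T) (x y z : T) (dx dy dz : T -> T).
Hypothesis sclE : forall l a, scl l a = iota l * a.
Hypothesis iota1 : iota 1 = 1.
Hypothesis two_reg : forall a : T, a + a = 0 -> a = 0.
Definition isder (D : T -> T) :=
  (forall a b, D (a + b) = D a + D b) /\ (forall a b, D (a * b) = D a * b + a * D b).
Hypothesis dxd : isder dx.
Hypothesis dyd : isder dy.
Hypothesis dzd : isder dz.
Hypothesis dxi : forall l, dx (iota l) = 0.
Hypothesis dyi : forall l, dy (iota l) = 0.
Hypothesis dzi : forall l, dz (iota l) = 0.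
Hypothesis dyx : forall a, dy (dx a) = dx (dy a).
Hypothesis dzx : forall a, dz (dx a) = dx (dz a).
Hypothesis dzy : forall a, dz (dy a) = dy (dz a).
Hypothesis dxx : dx x = 1.
Hypothesis dxy : dx y = 0.
Hypothesis dxz : dx z = 0.
Hypothesis dyx' : dy x = 0.
Hypothesis dyy : dy y = 1.
Hypothesis dyz : dy z = 0.
Hypothesis dzx' : dz x = 0.
Hypothesis dzy' : dz y = 0.
Hypothesis dzz : dz z = 1.
Hypothesis uniq : forall D, isder D -> (forall l, D (iota l) = 0) ->
  D x = 0 -> D y = 0 -> D z = 0 -> forall a, D a = 0.

Definition BS : Setting C := @MkSetting C T +%R -%R *%R scl 0 x y z dx dy dz.

Lemma der0 D : isder D -> D 0 = 0.
Proof. move=> [hD _]; have := hD 0 0; rewrite addr0 => h.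
by apply: (addrI (D 0)); rewrite addr0 -h. Qed.
Lemma derN D : isder D -> forall a, D (- a) = - D a.
Proof. move=> hD a; have := hD.1 a (- a); rewrite subrr der0 // => h.
by apply: (addrI (D a)); rewrite -h subrr. Qed.
Lemma derB D : isder D -> forall a b, D (a - b) = D a - D b.
Proof. by move=> hD a b; rewrite hD.1 derN. Qed.
Lemma deriM D : isder D -> (forall l, D (iota l) = 0) ->
   forall l a, D (iota l * a) = iota l * D a.
Proof. by move=> hD hi l a; rewrite hD.2 hi mul0r add0r. Qed.

Definition brF (f g h : T) (u v : T) : T :=
  f * (dy u * dz v - dz u * dy v) + g * (dz u * dx v - dx u * dz v)
  + h * (dx u * dy v - dy u * dx v).

Definition curlc (f g h : T) : T :=
  f * (dy h - dz g) + g * (dz f - dx h) + h * (dx g - dy f).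

Ltac dsimp := rewrite ?(dxd.1, dyd.1, dzd.1, dxd.2, dyd.2, dzd.2,
   derB dxd, derB dyd, derB dzd, derN dxd, derN dyd, derN dzd, dyx, dzx, dzy).

Lemma jacobi_brF f g h a b c :
  brF f g h a (brF f g h b c) + brF f g h b (brF f g h c a) + brF f g h c (brF f g h a b)
  = - curlc f g h * (dx a * (dy b * dz c - dz b * dy c) - dy a * (dx b * dz c - dz b * dx c)
      + dz a * (dx b * dy c - dy b * dx c)).
Proof. rewrite /brF /curlc; dsimp; ring. Qed.

Lemma brF_poisson f g h : curlc f g h = 0 -> poisson_bracket (B:=BS) (brF f g h).
Proof.
move=> hc; split => /=.
- move=> l m a b c; rewrite !sclE /brF; dsimp; rewrite ?dxi ?dyi ?dzi; ring.
- move=> a b; rewrite /brF; ring.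
- move=> a b c; rewrite /brF; dsimp; ring.
- move=> a b c; rewrite jacobi_brF hc; ring.
Qed.

Lemma brF_vals f g h :
  [/\ brF f g h y z = f, brF f g h z x = g & brF f g h x y = h].
Proof.
rewrite /brF !(dxx, dxy, dxz, dyx', dyy, dyz, dzx', dzy', dzz); split; ring.
Qed.

Section Uniq.
Variable br : T -> T -> T.
Hypothesis hbr : poisson_bracket (B:=BS) br.

Lemma br_lin l m a b c : br (iota l * a + iota m * b) c = iota l * br a c + iota m * br b c.
Proof. by case: hbr => /(_ l m a b c) /=; rewrite !sclE. Qed.
Lemma br_skew a b : br a b = - br b a.
Proof. by case: hbr => _ /(_ a b). Qed.
Lemma br_leib a b c : br a (b * c) = br a b * c + b * br a c.
Proof. by case: hbr => _ _ /(_ a b c). Qed.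
Lemma br_add2 u a b : br u (a + b) = br u a + br u b.
Proof.
rewrite br_skew (br_skew u a) (br_skew u b).
have := br_lin 1 1 a b u; rewrite iota1 !mul1r => ->; ring.
Qed.
Lemma br_0 u : br u 0 = 0.
Proof. have := br_leib u 0 0; rewrite !mulr0 !mul0r addr0 => ->; ring. Qed.
Lemma br_1 u : br u 1 = 0.
Proof. have := br_leib u 1 1; rewrite !mulr1 !mul1r => h.
by apply: (addrI (br u 1)); rewrite addr0 -h. Qed.
Lemma br_iota u l : br u (iota l) = 0.
Proof.
rewrite br_skew; have := br_lin l l 1 0 u; rewrite mulr1 mulr0 addr0 => ->.
by rewrite (br_skew 1) (br_skew 0) br_1 br_0 !oppr0 !mulr0 addr0 oppr0.
Qed.
Lemma br_xx u : br u u = 0.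
Proof. by apply: two_reg; rewrite {1}br_skew addNr. Qed.

Lemma br_der u : forall v, br u v = br u x * dx v + br u y * dy v + br u z * dz v.
Proof.
pose D v := br u v - (br u x * dx v + br u y * dy v + br u z * dz v).
have hD : isder D.
  split=> a b; rewrite /D.
    rewrite br_add2 dxd.1 dyd.1 dzd.1; ring.
  rewrite br_leib dxd.2 dyd.2 dzd.2; ring.
move=> v; suff: D v = 0 by rewrite /D => /eqP; rewrite subr_eq0 => /eqP.
apply: (uniq hD) => [l|||]; rewrite /D.
- by rewrite br_iota dxi dyi dzi; ring.
- rewrite dxx dyx' dzx'; ring.
- rewrite dxy dyy dzy'; ring.
- rewrite dxz dyz dzz; ring.
Qed.

Lemma br_formula u v : br u v = brF (br y z) (br z x) (br x y) u v.
Proof.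
rewrite br_der (br_skew u x) (br_skew u y) (br_skew u z) !(br_der x u) !(br_der y u) !(br_der z u).
rewrite !br_xx (br_skew y x) (br_skew x z) (br_skew z y) /brF; ring.
Qed.

Lemma br_curl : curlc (br y z) (br z x) (br x y) = 0.
Proof.
case: hbr => _ _ _ /(_ x y z) /=.
rewrite (br_formula x (br y z)) (br_formula y (br z x)) (br_formula z (br x y)).
rewrite /brF /curlc !(dxx, dxy, dxz, dyx', dyy, dyz, dzx', dzy', dzz) => h.
rewrite -oppr0 -h; ring.
Qed.
End Uniq.

Lemma curl_lin l m a b c :
  curlc (iota l * (c * dx a) + iota m * dx b) (iota l * (c * dy a) + iota m * dy b)
        (iota l * (c * dz a) + iota m * dz b)
  = iota l * iota m * (dx a * (dy b * dz c - dz b * dy c) - dy a * (dx b * dz c - dz b * dx c)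
      + dz a * (dx b * dy c - dy b * dx c)).
Proof. rewrite /curlc; dsimp; rewrite ?dxi ?dyi ?dzi; ring. Qed.

Theorem abstract_main (a b c : T) :
  compatible (B:=BS) (scaled_grad (B:=BS) c a) (grad (B:=BS) b) <-> jacdet (B:=BS) a b c = 0.
Proof.
rewrite /compatible /poisson_triple /lincomb /scaled_grad /grad /jacdet /=.
split.
- move=> /(_ 1 1) [br [hbr [e1 e2 e3]]].
  have := br_curl hbr; rewrite e1 e2 e3 !sclE curl_lin iota1 !mul1r.
  by [].
- move=> hj l m; eexists; split; last by apply: brF_vals.
  apply: brF_poisson; rewrite !sclE curl_lin.
  by move: hj => /= ->; rewrite mulr0.
Qed.
End Abstract.


Section PolyCase.
Variable R : realType.
Local Notation C := (complex R).
Local Notation A := (polyA R).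

Lemma mpoly_uniq (V : zmodType) (D : A -> V) :
  (forall p q, D (p + q) = D p + D q) ->
  (forall p q, D p = 0 -> D q = 0 -> D (p * q) = 0) ->
  (forall c, D c%:MP = 0) -> (forall i, D 'X_i = 0) -> forall p, D p = 0.
Proof.
move=> hD hM hC hX.
have D0 : D 0 = 0.
  have := hD 0 0; rewrite addr0 => h.
  by apply: (addrI (D 0)); rewrite addr0 -h.
have D1 : D 1 = 0 by rewrite -mpolyC1 hC.
have Dexp : forall i k, D ('X_i ^+ k) = 0.
  by move=> i; elim=> [|k ih]; rewrite ?expr0 ?D1 // exprS hM.
elim/mpolyind => [//|c m p _ _ ih]; rewrite hD ih addr0 -mul_mpolyC hM ?hC //.
rewrite mpolyXE_id.
apply: (big_ind (fun q => D q = 0)); first exact: D1.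
  by move=> p1 p2; apply: hM.
by move=> i _; apply: Dexp.
Qed.

Lemma mderivXi (i j : 'I_3) : mderiv i ('X_j : A) = if i == j then 1 else 0.
Proof.
rewrite mderivX mnm1E eq_sym; case: eqP => [->|_]; last by rewrite scale0r.
have -> : (U_(j) - U_(j) = 0)%MM by apply/mnmP => k; rewrite mnmBE subnn mnm0E.
by rewrite mpolyX0 scale1r.
Qed.

Lemma two_reg_A (a : A) : a + a = 0 -> a = 0.
Proof.
move=> h; have : a * (2%:R : C)%:MP = 0 by rewrite mpolyC_nat mulr_natr mulr2n.
move/eqP; rewrite mulf_eq0 mpolyC_eq0 pnatr_eq0 orbF => /eqP //.
Qed.

Lemma ord3 (P : 'I_3 -> Prop) : P 0 -> P 1 -> P (2 : 'I_3) -> forall i, P i.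
Proof.
move=> h0 h1 h2 [[|[|[|k]]] Hk].
- by have -> : Ordinal Hk = 0 by apply: val_inj.
- by have -> : Ordinal Hk = 1 by apply: val_inj.
- by have -> : Ordinal Hk = (2 : 'I_3) by apply: val_inj.
- by [].
Qed.

Lemma poly_case (a b c : A) :
  compatible (B:=polyS R) (scaled_grad (B:=polyS R) c a) (grad (B:=polyS R) b)
  <-> jacdet (B:=polyS R) a b c = zeroB (polyS R).
Proof.
have isd : forall i : 'I_3, isder (mderiv i : A -> A).
  by move=> i; split => p q; rewrite ?mderivD ?mderivM.
apply: (@abstract_main C A (fun l => l%:MP) (fun l p => l *: p)).

- by move=> l p; rewrite mul_mpolyC.
- exact: mpolyC1.
- exact: two_reg_A.
- exact: isd.
- exact: isd.
- exact: isd.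
- by move=> l; rewrite mderivC.
- by move=> l; rewrite mderivC.
- by move=> l; rewrite mderivC.
- by move=> p; rewrite mderiv_comm.
- by move=> p; rewrite mderiv_comm.
- by move=> p; rewrite mderiv_comm.
all: try by rewrite mderivXi.
move=> D [hD hM] hi hx hy hz.
apply: mpoly_uniq => //.
- by move=> p q hp hq; rewrite hM hp hq mulr0 mul0r addr0.
- exact: ord3.
Qed.
End PolyCase.

Section G.
Variable K : fieldType.
Lemma G_add (N1 N2 D1 D2 : K) : D1 != 0 -> D2 != 0 ->
  N1 / D1 + N2 / D2 = (N1 * D2 + N2 * D1) / (D1 * D2).
Proof. by move=> h1 h2; field; apply/andP. Qed.
Lemma G_mul (N1 N2 D1 D2 : K) : D1 != 0 -> D2 != 0 ->
  N1 / D1 * (N2 / D2) = (N1 * N2) / (D1 * D2).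
Proof. by move=> h1 h2; field; apply/andP. Qed.
Lemma G_addd (N1 N2 D1 D2 A1 A2 B1 B2 : K) : D1 != 0 -> D2 != 0 ->
  ((A1 * D2 + N1 * B2 + (A2 * D1 + N2 * B1)) * (D1 * D2) -
   (N1 * D2 + N2 * D1) * (B1 * D2 + D1 * B2)) /
  (D1 * D2 * (D1 * D2)) =
  (A1 * D1 - N1 * B1) / (D1 * D1) + (A2 * D2 - N2 * B2) / (D2 * D2).
Proof. by move=> h1 h2; field; apply/andP. Qed.
Lemma G_muld (N1 N2 D1 D2 A1 A2 B1 B2 : K) : D1 != 0 -> D2 != 0 ->
  ((A1 * N2 + N1 * A2) * (D1 * D2) - (N1 * N2) * (B1 * D2 + D1 * B2)) /
  (D1 * D2 * (D1 * D2)) =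
  (A1 * D1 - N1 * B1) / (D1 * D1) * (N2 / D2) + N1 / D1 * ((A2 * D2 - N2 * B2) / (D2 * D2)).
Proof. by move=> h1 h2; field; apply/andP. Qed.
Lemma G_comm (N D A1 A2 B1 B2 C1 C2 : K) :
  ((C1 * D + A1 * B2 - (A2 * B1 + N * C2)) * (D * D) -
   (A1 * D - N * B1) * (B2 * D + D * B2)) /
  (D * D * (D * D)) =
  ((C1 * D + A2 * B1 - (A1 * B2 + N * C2)) * (D * D) -
   (A2 * D - N * B2) * (B1 * D + D * B1)) /
  (D * D * (D * D)).
Proof. congr (_ / _); ring. Qed.
End G.


Lemma frac_repr (R : idomainType) (q : {fraction R}) :
  q * tofrac (\d_(repr q)) = tofrac (\n_(repr q)).
Proof.
set r := repr q; rewrite -[q]reprK -/r.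
rewrite [tofrac \d_r]piE [tofrac \n_r]piE.
rewrite -[_ * _]FracField.pi_mul.
apply/eqmodP => /=; rewrite FracField.equivfE /FracField.mulf.
have h1 := oner_neq0 R.
rewrite !(numer_Ratio _ h1) !(denom_Ratio _ h1) !mulr1.
have h2 := denom_ratioP r.
by rewrite (numer_Ratio _ h2) (denom_Ratio _ h2) mulrC.
Qed.

Lemma fieldE1 (K : fieldType) (N D D0 : K) : D != 0 -> N * D0 = N / D * D0 * D.
Proof. by move=> h; rewrite mulrAC divfK. Qed.
Lemma fieldE2 (K : fieldType) (N D N0 D0 N' D' N0' D0' : K) : D != 0 -> D0 != 0 ->
  N * D0 = N0 * D -> N' * D0 + N * D0' = N0' * D + N0 * D' ->
  (N0' * D0 - N0 * D0') / (D0 * D0) = (N' * D - N * D') / (D * D).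
Proof.
move=> hD hD0 F1 F2.
have eN0 : N0 = N * D0 / D by rewrite F1 mulfK.
have eN0' : N0' = (N' * D0 + N * D0' - N0 * D') / D.
  by rewrite F2 addrK mulfK.
rewrite eN0' eN0; field; apply/andP; split => //.
Qed.

Section FracCase.
Variable R : realType.
Local Notation C := (complex R).
Local Notation A := (polyA R).
Local Notation F := (fracQ R).
Local Notation "x %:F" := (@tofrac A x).

Lemma frac_rep (q : F) : exists n d, d != 0 /\ q = n%:F / d%:F.
Proof.
exists (\n_(repr q)), (\d_(repr q)); split; first exact: denom_ratioP.
rewrite -frac_repr mulfK // tofrac_eq0; exact: denom_ratioP.
Qed.

Lemma fd_eq i (n d : A) : d != 0 ->
  frac_deriv i (n%:F / d%:F) = (mderiv i n * d - n * mderiv i d)%:F / (d * d)%:F.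
Proof.
move=> hd; rewrite /frac_deriv.
set q := n%:F / d%:F; set n0 := \n_(repr q); set d0 := \d_(repr q).
have hd0 : d0 != 0 := denom_ratioP _.
have hr : q * d0%:F = n0%:F := frac_repr q.
clearbody n0 d0.
have hD : d%:F != 0 by rewrite tofrac_eq0.
have hD0 : d0%:F != 0 by rewrite tofrac_eq0.
have E1 : n * d0 = n0 * d.
  apply/eqP; rewrite -tofrac_eq !tofracM -hr /q; apply/eqP.
  by have := (@fieldE1 F (n%:F) (d%:F) (d0%:F) hD); move=> h; exact h.
have E2 := congr1 (mderiv i) E1; rewrite !mderivM in E2.
move: E2; set a1 := mderiv i n; set a2 := mderiv i d; set a3 := mderiv i n0;
  set a4 := mderiv i d0; clearbody a1 a2 a3 a4 => E2.
have F1 := congr1 (@tofrac A) E1; have F2 := congr1 (@tofrac A) E2.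
rewrite !(tofracM, tofracD) in F1 F2.
rewrite !(tofracM, tofracD, tofracB, tofracN).
have := (@fieldE2 F (n%:F) (d%:F) (n0%:F) (d0%:F) a1%:F a2%:F a3%:F a4%:F hD hD0 F1 F2).
by move=> h; exact h.
Qed.

End FracCase.

Section FracCase.
Variable R : realType.
Local Notation C := (complex R).
Local Notation A := (polyA R).
Local Notation F := (fracQ R).
Local Notation "x %:F" := (@tofrac A x).


Lemma fd_tofrac i (p : A) : frac_deriv i p%:F = (mderiv i p)%:F.
Proof. Time (idtac).
have h1 : (1 : A) != 0 := oner_neq0 _.
rewrite -[p%:F]divr1 -tofrac1 fd_eq //.
have -> : mderiv i (1 : A) = 0 by rewrite -mpolyC1 mderivC.
set a := mderiv i p; clearbody a.
by rewrite mulr0 subr0 !mulr1 tofrac1 divr1.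
Time Qed.

Lemma fd_add i (q1 q2 : F) : frac_deriv i (q1 + q2) = frac_deriv i q1 + frac_deriv i q2.
Proof. Time (idtac).
have [n1 [d1 [h1 ->]]] := frac_rep q1.
have [n2 [d2 [h2 ->]]] := frac_rep q2.
have h12 : d1 * d2 != 0 by rewrite mulf_neq0.
have H1 : d1%:F != 0 by rewrite tofrac_eq0.
have H2 : d2%:F != 0 by rewrite tofrac_eq0.
have -> : n1%:F / d1%:F + n2%:F / d2%:F = (n1 * d2 + n2 * d1)%:F / (d1 * d2)%:F.
  rewrite tofracD !tofracM.
  move: (n1%:F) (n2%:F) (d1%:F) (d2%:F) H1 H2 => N1 N2 D1 D2 H1 H2.
  have := @G_add F N1 N2 D1 D2 H1 H2; move=> h; exact h.
rewrite !fd_eq // !mderivD !mderivM.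
set a1 := mderiv i n1; set a2 := mderiv i n2; set b1 := mderiv i d1; set b2 := mderiv i d2.
clearbody a1 a2 b1 b2.
rewrite !(tofracM, tofracD, tofracB, tofracN).
move: (n1%:F) (n2%:F) (d1%:F) (d2%:F) (a1%:F) (a2%:F) (b1%:F) (b2%:F) H1 H2
  => N1 N2 D1 D2 A1 A2 B1 B2 H1 H2.
have := @G_addd F N1 N2 D1 D2 A1 A2 B1 B2 H1 H2; move=> h; exact h.
Time Qed.

Lemma fd_mul i (q1 q2 : F) :
  frac_deriv i (q1 * q2) = frac_deriv i q1 * q2 + q1 * frac_deriv i q2.
Proof. Time (idtac).
have [n1 [d1 [h1 ->]]] := frac_rep q1.
have [n2 [d2 [h2 ->]]] := frac_rep q2.
have h12 : d1 * d2 != 0 by rewrite mulf_neq0.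
have H1 : d1%:F != 0 by rewrite tofrac_eq0.
have H2 : d2%:F != 0 by rewrite tofrac_eq0.
have -> : n1%:F / d1%:F * (n2%:F / d2%:F) = (n1 * n2)%:F / (d1 * d2)%:F.
  rewrite !tofracM.
  move: (n1%:F) (n2%:F) (d1%:F) (d2%:F) H1 H2 => N1 N2 D1 D2 H1 H2.
  have := @G_mul F N1 N2 D1 D2 H1 H2; move=> h; exact h.
rewrite !fd_eq // !mderivM.
set a1 := mderiv i n1; set a2 := mderiv i n2; set b1 := mderiv i d1; set b2 := mderiv i d2.
clearbody a1 a2 b1 b2.
rewrite !(tofracM, tofracD, tofracB, tofracN).
move: (n1%:F) (n2%:F) (d1%:F) (d2%:F) (a1%:F) (a2%:F) (b1%:F) (b2%:F) H1 H2
  => N1 N2 D1 D2 A1 A2 B1 B2 H1 H2.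
have := @G_muld F N1 N2 D1 D2 A1 A2 B1 B2 H1 H2; move=> h; exact h.
Time Qed.

Lemma fd_comm i j (q : F) : frac_deriv j (frac_deriv i q) = frac_deriv i (frac_deriv j q).
Proof. Time (idtac).
have [n [d [h ->]]] := frac_rep q.
have hdd : d * d != 0 by rewrite mulf_neq0.
rewrite (fd_eq i n h) (fd_eq j n h) (fd_eq j _ hdd) (fd_eq i _ hdd).
rewrite !(mderivB, mderivM).
rewrite [mderiv j (mderiv i n)]mderiv_comm [mderiv j (mderiv i d)]mderiv_comm.
set a1 := mderiv i n; set a2 := mderiv j n; set b1 := mderiv i d; set b2 := mderiv j d.
set c1 := mderiv i a2; set c2 := mderiv i b2.
clearbody c1 c2 a1 a2 b1 b2.
rewrite !(tofracM, tofracD, tofracB, tofracN).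
move: (n%:F) (d%:F) (a1%:F) (a2%:F) (b1%:F) (b2%:F) (c1%:F) (c2%:F) => N D A1 A2 B1 B2 C1 C2.
have := @G_comm F N D A1 A2 B1 B2 C1 C2; move=> e; exact e.
Time Qed.
End FracCase.

Section FracCase.
Variable R : realType.
Local Notation C := (complex R).
Local Notation A := (polyA R).
Local Notation F := (fracQ R).
Local Notation "x %:F" := (@tofrac A x).

Lemma frac_uniq (D : F -> F) : isder D -> (forall l, D ((l%:MP)%:F) = 0) ->
  D ('X_0)%:F = 0 -> D ('X_1)%:F = 0 -> D ('X_(2 : 'I_3))%:F = 0 -> forall q, D q = 0.
Proof.
move=> [hD hM] hi hx hy hz.
have hp : forall p, D p%:F = 0.
  apply: (@mpoly_uniq R _ (fun p => D p%:F)).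
  - by move=> p q; rewrite tofracD hD.
  - by move=> p q hp hq; rewrite tofracM hM hp hq mulr0 mul0r addr0.
  - exact: hi.
  - exact: ord3.
move=> q; have [n [d [h e]]] := frac_rep q.
have hd : d%:F != 0 by rewrite tofrac_eq0.
have : D (q * d%:F) = 0 by rewrite e (divfK hd) hp.
rewrite hM hp mulr0 addr0 => /eqP; rewrite mulf_eq0 (negbTE hd) orbF => /eqP //.
Qed.

Lemma two_reg_F (a : F) : a + a = 0 -> a = 0.
Proof.
move=> h; have : a * 2%:R = 0 by rewrite mulr_natr mulr2n.
move/eqP; rewrite mulf_eq0 => /orP [/eqP //|].
rewrite -(rmorph_nat (@tofrac A)) tofrac_eq0 -mpolyC_nat mpolyC_eq0 pnatr_eq0 //.
Qed.

Lemma frac_case (a b c : F) :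
  compatible (B:=fracS R) (scaled_grad (B:=fracS R) c a) (grad (B:=fracS R) b)
  <-> jacdet (B:=fracS R) a b c = zeroB (fracS R).
Proof.
have isd : forall i : 'I_3, isder (frac_deriv i).
  by move=> i; split => p q; rewrite ?fd_add ?fd_mul.
have hi : forall (i : 'I_3) l, frac_deriv i (l%:MP)%:F = 0.
  by move=> i l; rewrite fd_tofrac mderivC tofrac0.
have hX : forall (i j : 'I_3), frac_deriv i ('X_j)%:F = if i == j then 1 else 0.
  by move=> i j; rewrite fd_tofrac mderivXi; case: (i == j); rewrite ?tofrac1 ?tofrac0.
apply: (@abstract_main C F (fun l => (l%:MP)%:F) (fun l q => (l%:MP)%:F * q)).
- by [].
- by rewrite mpolyC1 tofrac1.
- exact: two_reg_F.
- exact: isd.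
- exact: isd.
- exact: isd.
- exact: hi.
- exact: hi.
- exact: hi.
- by move=> p; rewrite fd_comm.
- by move=> p; rewrite fd_comm.
- by move=> p; rewrite fd_comm.
all: try by rewrite hX.
exact: frac_uniq.
Qed.
End FracCase.


Definition sr (S : Type) := nat -> S.

Section SR.
Variable S : comNzRingType.
Local Notation T := (sr S).

HB.instance Definition _ := boolp.gen_eqMixin T.
HB.instance Definition _ := boolp.gen_choiceMixin T.

Definition sr_add (f g : T) : T := fun i => f i + g i.
Definition sr_opp (f : T) : T := fun i => - f i.
Definition sr_zero : T := fun _ => 0.
Definition cst (c : S) : T := fun i => if i == 0%N then c else 0.
Definition sr_mul (f g : T) : T := fun i => \sum_(k < i.+1) f k * g (i - k)%N.

Lemma sr_addA : associative sr_add.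
Proof. by move=> f g h; apply: functional_extensionality => i; rewrite /sr_add addrA. Qed.
Lemma sr_addC : commutative sr_add.
Proof. by move=> f g; apply: functional_extensionality => i; rewrite /sr_add addrC. Qed.
Lemma sr_add0 : left_id sr_zero sr_add.
Proof. by move=> f; apply: functional_extensionality => i; rewrite /sr_add add0r. Qed.
Lemma sr_addN : left_inverse sr_zero sr_opp sr_add.
Proof. by move=> f; apply: functional_extensionality => i; rewrite /sr_add addNr. Qed.

HB.instance Definition _ := GRing.isZmodule.Build T sr_addA sr_addC sr_add0 sr_addN.

Definition trunc n (f : T) : {poly S} := \poly_(k < n) f k.

Lemma mul_coef f g n i : (i < n)%N -> (trunc n f * trunc n g)`_i = sr_mul f g i.
Proof.
move=> hi; rewrite coefM /sr_mul; apply: eq_bigr => k _; rewrite !coef_poly.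
have hk : (k < n)%N by apply: leq_ltn_trans hi; rewrite -ltnS.
have hk' : (i - k < n)%N by apply: leq_ltn_trans hi; rewrite leq_subr.
by rewrite hk hk'.
Qed.

Lemma sr_mulC : commutative sr_mul.
Proof.
move=> f g; apply: functional_extensionality => i.
by rewrite -!(@mul_coef _ _ i.+1) // mulrC.
Qed.

Lemma sr_mul3 f g h i :
  sr_mul (sr_mul f g) h i = (trunc i.+1 f * trunc i.+1 g * trunc i.+1 h)`_i.
Proof.
rewrite coefM /sr_mul; apply: eq_bigr => k _.
rewrite (@mul_coef _ _ i.+1) ?coef_poly ?ltnS ?leq_subr //.
by rewrite -ltnS.
Qed.

Lemma sr_mulA : associative sr_mul.
Proof.
move=> f g h; apply: functional_extensionality => i.
by rewrite sr_mulC sr_mul3 sr_mul3 mulrC mulrA.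
Qed.

Lemma sr_mul1 : left_id (cst 1) sr_mul.
Proof.
move=> f; apply: functional_extensionality => i.
rewrite /sr_mul big_ord_recl /= mul1r subn0 big1 ?addr0 // => k _.
by rewrite /cst /= mul0r.
Qed.

Lemma sr_mulDl : left_distributive sr_mul sr_add.
Proof.
move=> f g h; apply: functional_extensionality => i.
by rewrite /sr_mul /sr_add -big_split /=; apply: eq_bigr => k _; rewrite mulrDl.
Qed.

Lemma sr_one_neq0 : cst 1 != sr_zero.
Proof.
apply/eqP => h; have := congr1 (fun u => u 0%N) h; rewrite /cst /sr_zero /=.
by apply/eqP; exact: oner_neq0.
Qed.

HB.instance Definition _ := GRing.Zmodule_isComNzRing.Build T
  sr_mulA sr_mulC sr_mul1 sr_mulDl sr_one_neq0.

Lemma srE_add (f g : T) i : (f + g) i = f i + g i. Proof. by []. Qed.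
Lemma srE_opp (f : T) i : (- f) i = - f i. Proof. by []. Qed.
Lemma srE_zero i : (0 : T) i = 0. Proof. by []. Qed.
Lemma srE_mul (f g : T) i : (f * g) i = \sum_(k < i.+1) f k * g (i - k)%N. Proof. by []. Qed.
Lemma srE_one : (1 : T) = cst 1. Proof. by []. Qed.
Lemma srE_muln (f : T) n i : (f *+ n) i = f i *+ n.
Proof. by elim: n => [|n ih]; rewrite ?mulr0n // !mulrS srE_add ih. Qed.
Lemma srE_sum I (r : seq I) (P : pred I) (F : I -> T) i :
  (\sum_(k <- r | P k) F k) i = \sum_(k <- r | P k) F k i.
Proof. by elim/big_rec2: _ => // k y1 y2 _ <-. Qed.

Lemma mul_cst c (f : T) i : (cst c * f) i = c * f i.
Proof.
rewrite srE_mul big_ord_recl /= subn0 big1 ?addr0 // => k _.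
by rewrite /cst /= mul0r.
Qed.

Definition shX : T := fun i => if i == 1%N then 1 else 0.
Lemma mul_shX (f : T) i : (shX * f) i = if i is i'.+1 then f i' else 0.
Proof.
rewrite srE_mul big_ord_recl /= /shX /= mul0r add0r.
case: i => [|i]; first by rewrite big_ord0.
rewrite big_ord_recl /= mul1r subSS subn0 big1 ?addr0 // => k _.
by rewrite /bump /= mul0r.
Qed.

Definition sd (f : T) : T := fun i => f i.+1 *+ i.+1.

Lemma sd_add f g : sd (f + g) = sd f + sd g.
Proof. by apply: functional_extensionality => i; rewrite /sd srE_add mulrnDl. Qed.

Lemma sd_mul f g : sd (f * g) = sd f * g + f * sd g.
Proof.
apply: functional_extensionality => i; rewrite /sd srE_add srE_mul.
rewrite -/(sr_mul f g i.+1) -(@mul_coef _ _ i.+2) // -coef_deriv derivM coefD.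
rewrite !coefM; congr (_ + _); apply: eq_bigr => k _; rewrite coef_deriv !coef_poly.
  have hk : (k.+1 < i.+2)%N by rewrite ltnS.
  have hk' : (i - k < i.+2)%N by rewrite ltnS (leq_trans (leq_subr _ _)).
  by rewrite hk hk'.
have hk : (k < i.+2)%N by rewrite (leq_trans (ltn_ord k)).
have hk' : ((i - k).+1 < i.+2)%N by rewrite ltnS ltnS leq_subr.
by rewrite hk hk'.
Qed.

Lemma sd_der : isder sd.
Proof. by split; [exact: sd_add | exact: sd_mul]. Qed.

Lemma sd_cst c : sd (cst c) = 0.
Proof. by apply: functional_extensionality => i; rewrite /sd /cst /= mul0rn. Qed.

End SR.

Section Lift.
Variable S : comNzRingType.
Definition slift (d : S -> S) (f : sr S) : sr S := fun i => d (f i).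

Lemma slift_der d : isder d -> isder (slift d).
Proof.
move=> hd; have d0 := der0 hd.
split=> f g; apply: functional_extensionality => i; rewrite /slift.
  by rewrite !srE_add hd.1.
rewrite srE_add !srE_mul.
rewrite (big_morph d hd.1 d0) -big_split /=.
by apply: eq_bigr => k _; rewrite hd.2.
Qed.

Lemma slift_sd d : isder d -> forall f, slift d (sd f) = sd (slift d f).
Proof.
move=> hd f; apply: functional_extensionality => i; rewrite /slift /sd.
have dmn : forall a n, d (a *+ n) = d a *+ n.
  by move=> a; elim=> [|n ih]; rewrite ?mulr0n ?der0 // !mulrS hd.1 ih.
by rewrite dmn.
Qed.

Lemma slift_comm d1 d2 : (forall a, d1 (d2 a) = d2 (d1 a)) ->
  forall f, slift d1 (slift d2 f) = slift d2 (slift d1 f).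
Proof. by move=> h f; apply: functional_extensionality => i; rewrite /slift h. Qed.

Lemma slift_cst d c : isder d -> d c = 0 -> slift d (cst c) = 0.
Proof.
move=> hd hc; apply: functional_extensionality => i; rewrite /slift /cst.
by case: (i == 0%N); rewrite ?hc ?der0.
Qed.
End Lift.


Section PSCase.
Variable R : realType.
Local Notation C := (complex R).
Local Notation S1 := (sr C).
Local Notation S2 := (sr S1).
Local Notation S3 := (sr S2).

Ltac fext := let i := fresh "i" in let j := fresh "j" in let k := fresh "k" in
  apply: functional_extensionality => i; apply: functional_extensionality => j;
  apply: functional_extensionality => k.

Lemma ps_mulE : ps_mul (R:=R) = ( *%R : S3 -> S3 -> S3).
Proof.
apply: functional_extensionality => f; apply: functional_extensionality => g.
fext; rewrite srE_mul srE_sum srE_sum; apply: eq_bigr => i1 _.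
rewrite srE_mul srE_sum; apply: eq_bigr => j1 _.
by rewrite srE_mul.
Qed.

Lemma complS_eq p : complS p = @MkSetting C S3 +%R -%R *%R (@ps_scl R) 0
   (ps_x (p 0)) (ps_y (p 1)) (ps_z (p (2 : 'I_3))) (@ps_dx R) (@ps_dy R) (@ps_dz R).
Proof. by rewrite /complS ps_mulE. Qed.

Lemma psdxE : ps_dx (R:=R) = @sd S2.
Proof.
apply: functional_extensionality => f; fext.
by rewrite /ps_dx /sd !srE_muln mulr_natl.
Qed.
Lemma psdyE : ps_dy (R:=R) = slift (@sd S1).
Proof.
apply: functional_extensionality => f; fext.
by rewrite /ps_dy /slift /sd !srE_muln mulr_natl.
Qed.
Lemma psdzE : ps_dz (R:=R) = slift (slift (@sd C)).
Proof.
apply: functional_extensionality => f; fext.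
by rewrite /ps_dz /slift /sd mulr_natl.
Qed.

Definition iota3 (l : C) : S3 := cst (cst (cst l)).

Lemma two_reg_S (a : S3) : a + a = 0 -> a = 0.
Proof.
move=> h; fext; have := congr1 (fun u : S3 => u i j k) h => /= e.
have : a i j k * 2%:R = 0 by rewrite mulr_natr mulr2n.
by move/eqP; rewrite mulf_eq0 pnatr_eq0 orbF => /eqP.
Qed.

Definition X3 : S3 := shX S2.
Definition Y3 : S3 := cst (shX S1).
Definition Z3 : S3 := cst (cst (shX C)).

Lemma x_dec p0 : ps_x p0 = iota3 p0 + X3.
Proof.
fext; rewrite /ps_x /iota3 /X3 /shX /cst /=.
by case: i => [|[|i]]; case: j => [|j]; case: k => [|k];
  rewrite /= ?srE_add ?srE_one /cst /= ?srE_one /cst /= ?addr0 ?add0r.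
Qed.
Lemma y_dec p1 : ps_y p1 = iota3 p1 + Y3.
Proof.
fext; rewrite /ps_y /iota3 /Y3 /shX /cst /=.
by case: i => [|i]; case: j => [|[|j]]; case: k => [|k];
  rewrite /= ?srE_add ?srE_one /cst /= ?srE_one /cst /= ?addr0 ?add0r.
Qed.
Lemma z_dec p2 : ps_z p2 = iota3 p2 + Z3.
Proof.
fext; rewrite /ps_z /iota3 /Z3 /shX /cst /=.
by case: i => [|i]; case: j => [|j]; case: k => [|[|k]];
  rewrite /= ?srE_add ?srE_one /cst /= ?srE_one /cst /= ?addr0 ?add0r.
Qed.

Lemma evX (g : S3) i j k : (X3 * g) i j k = if i is i'.+1 then g i' j k else 0.
Proof. by rewrite /X3 mul_shX; case: i. Qed.
Lemma evY (g : S3) i j k : (Y3 * g) i j k = if j is j'.+1 then g i j' k else 0.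
Proof. by rewrite /Y3 mul_cst mul_shX; case: j. Qed.
Lemma evZ (g : S3) i j k : (Z3 * g) i j k = if k is k'.+1 then g i j k' else 0.
Proof. by rewrite /Z3 mul_cst mul_cst mul_shX; case: k. Qed.

Lemma decomp (f : S3) :
  f = iota3 (f 0%N 0%N 0%N) + X3 * (fun i j k => f i.+1 j k)
      + Y3 * (fun i j k => if i == 0%N then f 0%N j.+1 k else 0)
      + Z3 * (fun i j k => if (i == 0%N) && (j == 0%N) then f 0%N 0%N k.+1 else 0).
Proof.
fext; rewrite !srE_add evX evY evZ /iota3 /cst.
by case: i => [|i]; case: j => [|j]; case: k => [|k];
  rewrite /= ?srE_add ?srE_one /cst /= ?srE_one /cst /= ?addr0 ?add0r.
Qed.

Local Opaque iota3 X3 Y3 Z3.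

Lemma decomp' (f : S3) : exists c g h k, f = iota3 c + X3 * g + Y3 * h + Z3 * k.
Proof.
exists (f 0%N 0%N 0%N), (fun i j k => f i.+1 j k),
  (fun i j k => if i == 0%N then f 0%N j.+1 k else 0),
  (fun i j k => if (i == 0%N) && (j == 0%N) then f 0%N 0%N k.+1 else 0).
exact: decomp.
Qed.

Lemma uniq_gen (io : C -> S3) (X Y Z x y z : S3) p0 p1 p2 (D : S3 -> S3) :
  isder D -> (forall l, D (io l) = 0) -> D x = 0 -> D y = 0 -> D z = 0 ->
  x = io p0 + X -> y = io p1 + Y -> z = io p2 + Z ->
  (forall f : S3, exists c g h k, f = io c + X * g + Y * h + Z * k) ->
  (forall (g : S3) i j k, (X * g) i j k = if i is i'.+1 then g i' j k else 0) ->
  (forall (g : S3) i j k, (Y * g) i j k = if j is j'.+1 then g i j' k else 0) ->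
  (forall (g : S3) i j k, (Z * g) i j k = if k is k'.+1 then g i j k' else 0) ->
  forall a, D a = 0.
Proof.
move=> hD hi hx hy hz ex ey ez dec evX evY evZ.
have dX : D X = 0.
  by move: hx; rewrite ex hD.1 hi add0r.
have dY : D Y = 0.
  by move: hy; rewrite ey hD.1 hi add0r.
have dZ : D Z = 0.
  by move: hz; rewrite ez hD.1 hi add0r.
have key : forall n (f : S3) i j k, (i + j + k < n)%N -> D f i j k = 0.
  elim=> [//|n ih] f i j k hn.
  have [c [g [h [k0 ->]]]] := dec f.
  have E : D (io c + X * g + Y * h + Z * k0) = X * D g + Y * D h + Z * D k0.
    by rewrite !hD.1 !hD.2 hi dX dY dZ !mul0r !add0r.
  have -> : D (io c + X * g + Y * h + Z * k0) i j k =
    (X * D g) i j k + (Y * D h) i j k + (Z * D k0) i j k by rewrite E.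
  rewrite evX evY evZ.
  have t1 : (if i is i'.+1 then D g i' j k else 0) = 0.
    by case: i hn => // i hn; apply: ih; move: hn; rewrite !addSn ltnS.
  rewrite t1 {t1} add0r.
  have t2 : (if j is j'.+1 then D h i j' k else 0) = 0.
    by case: j hn => // j hn; apply: ih; move: hn; rewrite addnS addSn ltnS.
  rewrite t2 {t2} add0r.
  have t3 : (if k is k'.+1 then D k0 i j k' else 0) = 0.
    by case: k hn => // k hn; apply: ih; move: hn; rewrite addnS ltnS.
  exact: t3.
move=> a; fext; exact: (key (i + j + k).+1).
Qed.

Lemma ps_uniq p0 p1 p2 (D : S3 -> S3) : isder D -> (forall l, D (iota3 l) = 0) ->
  D (ps_x p0) = 0 -> D (ps_y p1) = 0 -> D (ps_z p2) = 0 -> forall a, D a = 0.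
Proof.
move=> hD hi hx hy hz.
exact: (uniq_gen hD hi hx hy hz (x_dec p0) (y_dec p1) (z_dec p2) decomp' evX evY evZ).
Qed.
End PSCase.


Section PSFinal.
Variable R : realType.
Local Notation C := (complex R).
Local Notation S1 := (sr C).
Local Notation S2 := (sr S1).
Local Notation S3 := (sr S2).

Ltac fext2 := let i := fresh "i" in let j := fresh "j" in let k := fresh "k" in
  apply: functional_extensionality => i; apply: functional_extensionality => j;
  apply: functional_extensionality => k.

Lemma one3E i j k : (1 : S3) i j k = if [&& i == 0%N, j == 0%N & k == 0%N] then 1 else 0.
Proof. by case: i => [|i]; case: j => [|j]; case: k => [|k]. Qed.

Lemma sclE3 l (a : S3) : ps_scl l a = iota3 l * a.
Proof. by fext2; rewrite /ps_scl /iota3 !mul_cst. Qed.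

Ltac vals := apply: functional_extensionality; case=> [|?];
  apply: functional_extensionality; case=> [|?];
  apply: functional_extensionality; case=> [|?];
  rewrite ?one3E /ps_dx /ps_dy /ps_dz /ps_x /ps_y /ps_z /= ?mulr1n ?mulr1 ?mulr0 //;
  rewrite /= ?andbF ?mulr0 //.

Lemma ps_case (p : 'I_3 -> C) (a b c : S3) :
  let B := @MkSetting C S3 +%R -%R *%R (@ps_scl R) 0
   (ps_x (p 0)) (ps_y (p 1)) (ps_z (p (2 : 'I_3))) (@ps_dx R) (@ps_dy R) (@ps_dz R) in
  compatible (B:=B) (scaled_grad (B:=B) c a) (grad (B:=B) b)
  <-> jacdet (B:=B) a b c = zeroB B.
Proof.
rewrite /=.
have sd2 : isder (@sd S1) := @sd_der S1.
have sd1 : isder (@sd C) := @sd_der C.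
have ld1 : isder (slift (@sd C)) := slift_der sd1.
apply: (@abstract_main C S3 (@iota3 R) (@ps_scl R)).
- exact: sclE3.
- by [].
- exact: two_reg_S.
- by rewrite psdxE; exact: sd_der.
- by rewrite psdyE; exact: slift_der.
- by rewrite psdzE; exact: slift_der.
- by move=> l; rewrite psdxE /iota3 sd_cst.
- by move=> l; rewrite psdyE /iota3 slift_cst // sd_cst.
- by move=> l; rewrite psdzE /iota3 slift_cst // slift_cst // sd_cst.
- by move=> f; rewrite psdxE psdyE slift_sd.
- by move=> f; rewrite psdxE psdzE slift_sd.
- move=> f; rewrite psdyE psdzE slift_comm // => g; exact: slift_sd.
all: try by vals.
move=> D hD hi hx hy hz; exact: (ps_uniq hD hi hx hy hz).
Qed.
End PSFinal.

Theorem corollary1p22 (R : realType) (B : Setting (complex R)) :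
  (B = polyS R \/ B = fracS R \/ exists p : 'I_3 -> complex R, B = complS p) ->
  forall a b c : B,
    compatible (scaled_grad c a) (grad b) <-> jacdet a b c = zeroB B.
Proof.
move=> [->|[->|[p ->]]].
- exact: poly_case.
- exact: frac_case.
- rewrite complS_eq; exact: ps_case.
Qed.
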